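(* There exists a stably correct CRN protocol $\Pi=(\mathcal{S},\mathcal{R})$ such that $\operatorname{RT}_{\mathrm{stab}}^{\Pi}(n)=O(\log n)$, but if the minimum in the definition of $\operatorname{RT}_{\mathrm{stab}}^{\Pi}(n)$ is restricted to runtime policies $\varrho$ with $\varrho(\mathbf{c})\subseteq\mathcal{E}(\mathbf{c})$ for every configuration $\mathbf{c}$, then the resulting quantity is $\Omega(n)$.
   Context: $\mathcal{E}(\mathbf{c})$ denotes the set of reactions that escape from the strongly connected component of $\mathbf{c}$ in the configuration digraph $D^{\Pi}$ (which has an $\alpha$-labeled edge $\mathbf{c}\to\alpha(\mathbf{c})$ for each configuration $\mathbf{c}$ and each $\alpha\in\operatorname{app}(\mathbf{c})$); a reaction $\alpha$ escapes from a component $S$ if $\alpha\in\operatorname{app}(\mathbf{c})$ and $\alpha(\mathbf{c})\notin S$ for all $\mathbf{c}\in S$. CRN model: $\Pi=(\mathcal{S},\mathcal{R})$, finite species set, finite reaction set $\mathcal{R}\subset\mathbb{N}^{\mathcal{S}}\times\mathbb{N}^{\mathcal{S}}$; reactions $(\mathbf{r},\mathbf{p})$ with $\|\mathbf{r}\|_1\in\{1,2\}$, $\|\mathbf{r}\|_1\le\|\mathbf{p}\|_1$; every $\mathbf{r}$ with $1\le\|\mathbf{r}\|_1\le2$ has a nonempty set $\mathcal{R}(\mathbf{r})$ of reactions; void reactions ($\mathbf{r}=\mathbf{p}$) alone in their $\mathcal{R}(\mathbf{r})$; $\operatorname{NV}(\mathcal{R})$ non-void; finite density. Configurations $\mathbf{c}\in\mathbb{N}^{\mathcal{S}}$,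 $\|\mathbf{c}\|_1\ge1$; applicability $\mathbf{r}\le\mathbf{c}$, result $\alpha(\mathbf{c})=\mathbf{c}-\mathbf{r}+\mathbf{p}$; $\operatorname{app}(\mathbf{c})$; reachability $\stackrel{*}{\rightharpoonup}$; $\mathrm{stab}(Z)=\{\mathbf{c}\in Z:\mathbf{c}\stackrel{*}{\rightharpoonup}\mathbf{c}'\Rightarrow\mathbf{c}'\in Z\}$. Weakly fair executions $\langle\mathbf{c}^t,\alpha^t\rangle$: every reaction applicable at step $t$ is later scheduled or becomes inapplicable. Correctness is w.r.t. an interface $\mathcal{I}=(\mathcal{U},\mu,\mathcal{C})$ giving target sets $Z_{\mathcal{I}}(\mathbf{c}^0)=\{\mathbf{c}:(\mu(\mathbf{c}^0),\mu(\mathbf{c}))\in\mathcal{C}\}$ and valid initial configurations (those with $Z_{\mathcal{I}}(\mathbf{c}^0)\ne\emptyset$); stably correct: every weakly fair valid execution reaches $\mathrm{stab}(Z_{\mathcal{I}}(\mathbf{c}^0))$, first such step = stabilization step. Runtime: stochastic scheduler with volume $\varphi=\Theta(n)$, $n=\|\mathbf{c}^0\|_1$; propensity $\pi_{\mathbf{c}}(\alpha)=\mathbf{c}(A)/|\mathcal{R}(\mathbf{r})|$ ($\mathbf{r}=A$), $\frac1\varphi\binom{\mathbf{c}(A)}2/|\mathcal{R}(\mathbf{r})|$ ($\mathbf{r}=2A$), $\frac1\varphi\mathbf{c}(A)\mathbf{c}(B)/|\mathcal{R}(\mathbf{r})|$ ($\mathbf{r}=A+B$); step time span $1/\pi_{\mathbf{c}}(\mathcal{R})$.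 $\tau(\eta,t,Q)$ = least $s>t$ with $\alpha^{s-1}\in Q$ or every reaction of $Q$ inapplicable at some step in $[t,s]$. Runtime policy $\varrho(\mathbf{c})\subseteq\operatorname{NV}(\mathcal{R})$; skipping policy $\sigma(t)\ge t$; rounds $t(0)=0$, $t_e(i)=\sigma(t(i))$, $\mathbf{e}^i=\mathbf{c}^{t_e(i)}$, $t(i+1)=\tau(\eta,t_e(i),\varrho(\mathbf{e}^i))$; $\operatorname{TC}^{\varrho}(\mathbf{c})$ = expected total time span of the steps before $\tau(\eta_r,0,\varrho(\mathbf{c}))$ of a stochastic execution from $\mathbf{c}$; $\operatorname{RT}_{\mathrm{stab}}^{\varrho,\sigma}(\eta)=\sum_{i<i^*}\operatorname{TC}^{\varrho}(\mathbf{e}^i)$, $i^*=\min\{i:t(i)\ge t^*\}$; $\operatorname{RT}_{\mathrm{stab}}^{\Pi}(n)=\min_\varrho\max_{\eta,\sigma}\operatorname{RT}_{\mathrm{stab}}^{\varrho,\sigma}(\eta)$, max over weakly fair valid executions with initial molecular count $n$ and all skipping policies. *)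

(* Defs.v *)
From HB Require Import structures.
From mathcomp Require Import all_boot all_order all_algebra.
From mathcomp Require Import all_classical all_reals all_analysis.
From mathcomp Require Import Rstruct.

Set Implicit Arguments.
Unset Strict Implicit.
Unset Printing Implicit Defensive.

Import Order.TTheory GRing.Theory Num.Theory.
Local Open Scope ring_scope.

Section CRN.
Variable S : finType.

Definition config := {ffun S -> nat}.
Definition reaction := (config * config)%type.
Definition dflt_reaction : reaction := ([ffun=> 0%N], [ffun=> 0%N]).

Definition norm1 (c : config) : nat := (\sum_(s : S) c s)%N.
Definition applicable (a : reaction) (c : config) : bool := [forall s, (a.1 s <= c s)%N].
Definition apply_r (a : reaction) (c : config) : config :=
  [ffun s => (c s - a.1 s + a.2 s)%N].
Definition is_void (a : reaction) : bool := a.1 == a.2.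
Definition Rof (Rs : seq reaction) (r : config) : seq reaction := [seq a <- Rs | a.1 == r].
Definition NV (Rs : seq reaction) : seq reaction := [seq a <- Rs | ~~ is_void a].

Inductive reach (Rs : seq reaction) : config -> config -> Prop :=
| reach_refl c : reach Rs c c
| reach_step c a c' : a \in Rs -> applicable a c -> reach Rs (apply_r a c) c' -> reach Rs c c'.

Definition finite_density (Rs : seq reaction) : Prop :=
  exists K : nat, forall c c', (1 <= norm1 c)%N -> reach Rs c c' -> (norm1 c' <= K * norm1 c)%N.

Definition is_crn (Rs : seq reaction) : Prop :=
  [/\ uniq Rs,
      (forall a, a \in Rs -> ((norm1 a.1 == 1) || (norm1 a.1 == 2))%N && (norm1 a.1 <= norm1 a.2)%N),
      (forall r : config, (1 <= norm1 r <= 2)%N -> (exists2 a, a \in Rs & a.1 = r)),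
      (forall a, a \in Rs -> is_void a -> forall b, b \in Rs -> b.1 = a.1 -> b = a) &
      NV Rs != [::]] /\
  finite_density Rs.

Record interface := Interface { U_of : Type; mu_of : config -> U_of; C_of : U_of -> U_of -> Prop }.

Definition Ztarget (I : interface) (c0 c : config) : Prop := C_of (mu_of I c0) (mu_of I c).
Definition valid (I : interface) (c0 : config) : Prop := exists c, (1 <= norm1 c)%N /\ Ztarget I c0 c.
Definition stab (Rs : seq reaction) (Z : config -> Prop) (c : config) : Prop :=
  Z c /\ forall c', reach Rs c c' -> Z c'.

Definition is_exec (Rs : seq reaction) (cs : nat -> config) (al : nat -> reaction) : Prop :=
  (1 <= norm1 (cs 0%N))%N /\
  forall t, [/\ al t \in Rs, applicable (al t) (cs t) & cs t.+1 = apply_r (al t) (cs t)].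

Definition weakly_fair (Rs : seq reaction) (cs : nat -> config) (al : nat -> reaction) : Prop :=
  forall t a, a \in Rs -> applicable a (cs t) ->
    exists2 t', (t <= t')%N & (al t' = a \/ ~~ applicable a (cs t')).

Definition stably_correct (Rs : seq reaction) (I : interface) : Prop :=
  forall cs al, is_exec Rs cs al -> weakly_fair Rs cs al -> valid I (cs 0%N) ->
    exists t, stab Rs (Ztarget I (cs 0%N)) (cs t).

Definition least (P : pred nat) : option nat :=
  match pselect (exists n, P n) with
  | left h => Some (ex_minn h)
  | right _ => None
  end.

Definition tau_stop (Rs : seq reaction) (cs : nat -> config) (al : nat -> reaction)
    (t : nat) (Q : pred reaction) (s : nat) : bool :=
  (t < s)%N &&
  (Q (al s.-1) ||
   [exists u : 'I_s.+1, (t <= u)%N && all (fun a => Q a ==> ~~ applicable a (cs u)) Rs]).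

(* tau(eta,t,Q); None = infinity *)
Definition tau (Rs : seq reaction) cs al (t : nat) (Q : pred reaction) : option nat :=
  least (tau_stop Rs cs al t Q).

Local Notation R := Rdefinitions.R.

(* mass-action propensity with volume v:  c(A)/|R(r)|, (1/v) C(c(A),2)/|R(r)|,
   (1/v) c(A)c(B)/|R(r)|  for r = A, 2A, A+B respectively. *)
Definition propensity (v : R) (Rs : seq reaction) (c : config) (a : reaction) : R :=
  ((\prod_(s : S) 'C(c s, a.1 s))%N)%:R / v ^+ (norm1 a.1).-1 / (size (Rof Rs a.1))%:R.

Definition prop_total (v : R) (Rs : seq reaction) (c : config) : R :=
  \sum_(a <- Rs) propensity v Rs c a.

Fixpoint allseqs (Rs : seq reaction) (t : nat) : seq (seq reaction) :=
  match t with
  | 0%N => [:: [::]]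
  | t'.+1 => [seq a :: p | a <- Rs, p <- allseqs Rs t']
  end.

Definition cfg_at (c : config) (p : seq reaction) (u : nat) : config :=
  foldl (fun c a => apply_r a c) c (take u p).
Definition act_at (p : seq reaction) (u : nat) : reaction := nth dflt_reaction p u.

(* probability that the stochastic execution from c starts with the reactions p *)
Definition path_prob (v : R) Rs (c : config) (p : seq reaction) : R :=
  \prod_(i < size p) (propensity v Rs (cfg_at c p i) (act_at p i) / prop_total v Rs (cfg_at c p i)).

(* step number size p is before tau(eta_r, 0, Q) *)
Definition counted Rs (c : config) (p : seq reaction) (Q : pred reaction) : bool :=
  ~~ [exists s : 'I_(size p).+1, tau_stop Rs (cfg_at c p) (act_at p) 0 Q s].

(* TC^rho(c) with Q = rho(c): expected total time span of the steps before tau(eta_r,0,Q) *)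
Definition TC (v : R) Rs (Q : pred reaction) (c : config) : \bar R :=
  \sum_(0 <= t <oo)
    ((\sum_(p <- allseqs Rs t)
        (if counted Rs c p Q
         then path_prob v Rs c p * (prop_total v Rs (cfg_at c p t))^-1 else 0))%:E).

Definition is_runtime_policy Rs (rho : config -> pred reaction) : Prop :=
  forall c a, rho c a -> a \in NV Rs.
Definition is_skipping_policy (sigma : nat -> nat) : Prop := forall t, (t <= sigma t)%N.

Fixpoint round Rs cs al (sigma : nat -> nat) (rho : config -> pred reaction) (i : nat) : option nat :=
  match i with
  | 0%N => Some 0%N
  | i'.+1 => match round Rs cs al sigma rho i' with
             | Some ti => tau Rs cs al (sigma ti) (rho (cs (sigma ti)))
             | None => None
             end
  end.

Definition stab_step Rs (I : interface) cs : option nat :=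
  least (fun t => `[< stab Rs (Ztarget I (cs 0%N)) (cs t) >]).

Definition RT_exec (v : R) Rs I cs al sigma rho : \bar R :=
  match stab_step Rs I cs with
  | Some ts =>
      match least (fun i => if round Rs cs al sigma rho i is Some ti then (ts <= ti)%N else true) with
      | Some istar =>
          \sum_(i < istar)
             (if round Rs cs al sigma rho i is Some ti
              then TC v Rs (rho (cs (sigma ti))) (cs (sigma ti)) else 0%E)
      | None => +oo%E
      end
  | None => +oo%E
  end.

Definition RT_max (v : R) Rs I rho (n : nat) : \bar R :=
  ereal_sup [set x | exists cs al sigma,
    [/\ is_exec Rs cs al, weakly_fair Rs cs al, valid I (cs 0%N), norm1 (cs 0%N) = n &
        is_skipping_policy sigma] /\ x = RT_exec v Rs I cs al sigma rho].

Definition RT_stab (phi : nat -> R) Rs I (n : nat) : \bar R :=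
  ereal_inf [set x | exists rho, is_runtime_policy Rs rho /\ x = RT_max (phi n) Rs I rho n].

Definition scc Rs (c c' : config) : Prop := reach Rs c c' /\ reach Rs c' c.
Definition escapes Rs (c : config) (a : reaction) : Prop :=
  a \in Rs /\ forall c', scc Rs c c' -> applicable a c' /\ ~ scc Rs c (apply_r a c').

Definition RT_stab_esc (phi : nat -> R) Rs I (n : nat) : \bar R :=
  ereal_inf [set x | exists rho, [/\ is_runtime_policy Rs rho,
      (forall c, (1 <= norm1 c)%N -> forall a, rho c a -> escapes Rs c a)
    & x = RT_max (phi n) Rs I rho n]].

End CRN.

Definition volume_theta (phi : nat -> Rdefinitions.R) : Prop :=
  exists a b : Rdefinitions.R, [/\ 0 < a, 0 < b &
    forall n : nat, (1 <= n)%N -> a * n%:R <= phi n <= b * n%:R].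

(* Main.v *)
Require Import Defs.
From HB Require Import structures.
From mathcomp Require Import all_boot all_order all_algebra.
From mathcomp Require Import all_classical all_reals all_analysis.
From mathcomp Require Import Rstruct.
From mathcomp Require Import zify ring lra.
Import Order.TTheory GRing.Theory Num.Theory.
Local Open Scope ring_scope.

Set Implicit Arguments.
Unset Strict Implicit.
Unset Printing Implicit Defensive.

Local Notation R := Rdefinitions.R.


Lemma least_some (P : pred nat) n : P n ->
  exists m, least P = Some m /\ P m /\ (forall k, P k -> (m <= k)%N).
Proof.
move=> Pn; rewrite /least; case: pselect => [h|[]]; last by exists n.
case: ex_minnP => m Pm minm; by exists m.
Qed.

Lemma least_spec (P : pred nat) m : least P = Some m -> P m /\ forall k, P k -> (m <= k)%N.
Proof. rewrite /least; case: pselect => // h [<-]; by case: ex_minnP. Qed.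

Lemma ex_ord_has k (P : pred nat) : [exists i : 'I_k, P i] = has P (iota 0 k).
Proof.
apply/existsP/hasP => [[i Pi]|[x]]; first by exists (nat_of_ord i); rewrite // mem_iota add0n /= ltn_ord.
by rewrite mem_iota add0n /= => lt Px; exists (Ordinal lt).
Qed.

Lemma has_iotaS (P : pred nat) m n : has P (iota m.+1 n) = has (fun i => P i.+1) (iota m n).
Proof. by elim: n m => //= n IH m; rewrite IH. Qed.

Section Generic.
Variable S : finType.
Variable Rs : seq (reaction S).
Variable Q : pred (reaction S).
Variable v : R.

Definition AI (c : config S) := all (fun a => Q a ==> ~~ applicable a c) Rs.

Lemma stop_has c p s : tau_stop Rs (cfg_at c p) (act_at p) 0 Q s =
  (0 < s)%N && (Q (act_at p s.-1) || has (fun u => AI (cfg_at c p u)) (iota 0 s.+1)).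
Proof.
rewrite /tau_stop (ex_ord_has _ (fun u => (0 <= u)%N && AI (cfg_at c p u))).
by congr (_ && (_ || _)); apply: eq_has => u.
Qed.

Lemma counted_nil c : counted Rs c [::] Q.
Proof. by rewrite /counted (ex_ord_has _ (fun s => tau_stop Rs _ _ 0 Q s)). Qed.

Definition cond c a := ~~ AI c && ~~ Q a && ~~ AI (apply_r a c).

Lemma G_cons c a p s :
  has (fun u => AI (cfg_at c (a :: p) u)) (iota 0 s.+2) =
  AI c || has (fun u => AI (cfg_at (apply_r a c) p u)) (iota 0 s.+1).
Proof. by rewrite [iota 0 _]/= [has _ (_ :: _)]/= has_iotaS. Qed.

Lemma stop_cons c a p s :
  tau_stop Rs (cfg_at c (a :: p)) (act_at (a :: p)) 0 Q s.+1 =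
  [|| Q (act_at (a :: p) s), AI c | has (fun u => AI (cfg_at (apply_r a c) p u)) (iota 0 s.+1)].
Proof. by rewrite stop_has G_cons. Qed.

Lemma stop_S c p s :
  tau_stop Rs (cfg_at c p) (act_at p) 0 Q s.+1 =
  Q (act_at p s) || has (fun u => AI (cfg_at c p u)) (iota 0 s.+2).
Proof. by rewrite stop_has. Qed.

Lemma stop_0 c p : tau_stop Rs (cfg_at c p) (act_at p) 0 Q 0 = false.
Proof. by []. Qed.

Lemma has_iota0S (P : pred nat) n : has P (iota 0 n.+1) = P 0%N || has (fun i => P i.+1) (iota 0 n).
Proof. by rewrite -has_iotaS. Qed.

Lemma counted_cons c a p :
  counted Rs c (a :: p) Q = cond c a && counted Rs (apply_r a c) p Q.
Proof.
rewrite /counted (ex_ord_has _ (fun s => tau_stop Rs (cfg_at c (a :: p)) (act_at (a :: p)) 0 Q s)).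
rewrite (ex_ord_has _ (fun s => tau_stop Rs (cfg_at (apply_r a c) p) (act_at p) 0 Q s)).
rewrite has_iota0S stop_0 orFb.
under eq_has do rewrite stop_cons.
rewrite [size (a :: p)]/= has_iota0S.
rewrite [X in _ = _ && ~~ X]has_iota0S stop_0 orFb.
under [X in _ = _ && ~~ X]eq_has do rewrite stop_S.
rewrite /act_at /=.
rewrite /cond; case: (AI c) => /=.
  by rewrite orbT.
rewrite [cfg_at (apply_r a c) p 0]/cfg_at take0 /=.
by case: (Q a); case: (AI (apply_r a c)).
Qed.

Lemma path_prob_cons c a p :
  path_prob v Rs c (a :: p) =
  propensity v Rs c a / prop_total v Rs c * path_prob v Rs (apply_r a c) p.
Proof.
rewrite /path_prob /= big_ord_recl /=; congr (_ * _).
Qed.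

Definition fterm c t := \sum_(p <- allseqs Rs t)
  (if counted Rs c p Q then path_prob v Rs c p * (prop_total v Rs (cfg_at c p t))^-1 else 0).

Lemma fterm0 c : fterm c 0 = (prop_total v Rs c)^-1.
Proof.
by rewrite /fterm /= big_cons big_nil counted_nil /path_prob big_ord0 mul1r addr0.
Qed.

Definition w c a := if cond c a then propensity v Rs c a / prop_total v Rs c else 0.

Lemma ftermS c t : fterm c t.+1 = \sum_(a <- Rs) w c a * fterm (apply_r a c) t.
Proof.
rewrite /fterm /= big_allpairs_dep; apply: eq_bigr => a _; rewrite /w.
case Hc: (cond c a).
  rewrite big_distrr; apply: eq_bigr => p _ /=.
  rewrite counted_cons path_prob_cons Hc /=.
  case: (counted _ _ _ _); last by rewrite mulr0.
  by rewrite [in RHS]mulrA.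
rewrite mul0r big1 // => p _.
by rewrite counted_cons Hc.
Qed.

Definition Ssum c T := \sum_(t < T) fterm c t.

Lemma SsumS c T : Ssum c T.+1 =
  (prop_total v Rs c)^-1 + \sum_(a <- Rs) w c a * Ssum (apply_r a c) T.
Proof.
rewrite /Ssum big_ord_recl fterm0; congr (_ + _).
under eq_bigr do rewrite ftermS.
rewrite exchange_big /=; apply: eq_bigr => a _.
by rewrite mulr_sumr.
Qed.

Hypothesis v_ge0 : 0 <= v.

Lemma propensity_ge0 c a : 0 <= propensity v Rs c a.
Proof. by rewrite /propensity !divr_ge0 // exprn_ge0. Qed.

Lemma prop_total_ge0 c : 0 <= prop_total v Rs c.
Proof. by rewrite /prop_total sumr_ge0 // => a _; exact: propensity_ge0. Qed.

Lemma w_ge0 c a : 0 <= w c a.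
Proof.
by rewrite /w; case: ifP => // _; rewrite divr_ge0 ?propensity_ge0 ?prop_total_ge0.
Qed.

Lemma fterm_ge0 t c : 0 <= fterm c t.
Proof.
elim: t c => [|t IH] c; first by rewrite fterm0 invr_ge0 prop_total_ge0.
by rewrite ftermS sumr_ge0 // => a _; rewrite mulr_ge0 ?w_ge0.
Qed.

Lemma Ssum_ge0 T c : 0 <= Ssum c T.
Proof. by rewrite /Ssum sumr_ge0 // => t _; exact: fterm_ge0. Qed.

Lemma TCE c : TC v Rs Q c = (\sum_(0 <= t <oo) (fterm c t)%:E)%E.
Proof. by []. Qed.

Lemma TC_ge T c : ((Ssum c T)%:E <= TC v Rs Q c)%E.
Proof.
rewrite TCE; apply: le_trans (nneseries_lim_ge T _); last first.
  by move=> n _ _; rewrite lee_fin fterm_ge0.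
by rewrite -sumEFin big_mkord /Ssum.
Qed.

Lemma TC_le M c : (forall T, Ssum c T <= M) -> (TC v Rs Q c <= M%:E)%E.
Proof.
move=> HM; rewrite TCE.
apply: lime_le; first by apply: is_cvg_nneseries => n _ _; rewrite lee_fin fterm_ge0.
apply: nearW => T /=.
by rewrite sumEFin lee_fin big_mkord; exact: HM.
Qed.

Definition lamQ c := \sum_(a <- Rs | Q a) propensity v Rs c a.

Lemma prop_split c : prop_total v Rs c = lamQ c + \sum_(a <- Rs | ~~ Q a) propensity v Rs c a.
Proof. by rewrite /prop_total /lamQ (bigID Q). Qed.

Lemma Ssum_AI T c : AI c -> Ssum c T <= (prop_total v Rs c)^-1.
Proof.
case: T => [|T] H; first by rewrite /Ssum big_ord0 invr_ge0 prop_total_ge0.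
rewrite SsumS big1 ?addr0 // => a _.
by rewrite /w /cond H /= mul0r.
Qed.

Lemma real_ub (lam lq r Pi : R) : 0 < lam -> lam <= lq -> 0 <= r -> Pi = lq + r ->
  Pi^-1 + r / Pi * lam^-1 <= lam^-1.
Proof.
move=> l0 llq r0 ->.
have P0 : 0 < lq + r by lra.
have -> : (lq + r)^-1 + r / (lq + r) * lam^-1 = (lam + r) / ((lq + r) * lam).
  by field; apply/andP; split; rewrite gt_eqF.
rewrite ler_pdivrMr ?mulr_gt0 //.
have -> : lam^-1 * ((lq + r) * lam) = lq + r by field; rewrite gt_eqF.
lra.
Qed.

Lemma Ssum_ub (lam : R) : 0 < lam -> (forall c, ~~ AI c -> lam <= lamQ c) ->
  forall T c, ~~ AI c -> Ssum c T <= lam^-1.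
Proof.
move=> l0 Hl; elim=> [|T IH] c Hc; first by rewrite /Ssum big_ord0 invr_ge0 ltW.
rewrite SsumS.
set Pi := prop_total v Rs c.
set r := \sum_(a <- Rs | ~~ Q a) propensity v Rs c a.
have Pi_eq : Pi = lamQ c + r by rewrite /Pi prop_split.
have r0 : 0 <= r by rewrite /r sumr_ge0 // => a _; exact: propensity_ge0.
have Pi0 : 0 < Pi by have := Hl c Hc; lra.
apply: le_trans (real_ub l0 (Hl c Hc) r0 Pi_eq).
rewrite lerD2l.
have -> : r / Pi * lam^-1 = \sum_(a <- Rs) (if ~~ Q a then propensity v Rs c a / Pi * lam^-1 else 0).
  by rewrite -big_mkcond /r !mulr_suml.
apply: ler_sum => a _.
rewrite /w; case: ifP => [Hca|_].
  move: Hca; rewrite /cond => /andP[/andP[_ ->] Hac].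
  have Pi0' : 0 <= Pi by exact: ltW.
  by rewrite ler_wpM2l ?IH // divr_ge0 ?propensity_ge0.
have Pi0' : 0 <= Pi^-1 by rewrite invr_ge0 ltW.
have l0' : 0 <= lam^-1 by rewrite invr_ge0 ltW.
rewrite mul0r; case: ifP => // _. by apply: divr_ge0; [apply: divr_ge0; [exact: propensity_ge0|exact: ltW]|exact: ltW].
Qed.

Lemma real_lb (lam B Pi rest x : R) : 0 < lam -> 0 < Pi -> Pi <= B -> Pi - lam <= rest ->
  0 <= x <= 1 ->
  lam^-1 * (1 - x * (1 - lam / B)) <= Pi^-1 + rest / Pi * (lam^-1 * (1 - x)).
Proof.
move=> l0 P0 PB hr /andP[x0 x1].
have B0 : 0 < B by apply: lt_le_trans PB.
have L0 : 0 <= lam^-1 * (1 - x) by apply: mulr_ge0; [rewrite invr_ge0; exact: ltW|rewrite subr_ge0].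
have h1 : (Pi - lam) / Pi * (lam^-1 * (1 - x)) <= rest / Pi * (lam^-1 * (1 - x)).
  by rewrite ler_wpM2r // ler_wpM2r // invr_ge0 ltW.
have h2 : Pi^-1 + (Pi - lam) / Pi * (lam^-1 * (1 - x)) = lam^-1 * (1 - x) + x / Pi.
  by field; apply/andP; split; rewrite gt_eqF.
have h3 : x / B <= x / Pi.
  by rewrite ler_wpM2l // lef_pV2 ?posrE.
have h4 : lam^-1 * (1 - x * (1 - lam / B)) = lam^-1 * (1 - x) + x / B.
  by field; apply/andP; split; rewrite gt_eqF.
lra.
Qed.

Lemma Ssum_lb (P : config S -> Prop) (lam B : R) : 0 < lam -> lam <= B ->
  (forall c, P c -> [/\ ~~ AI c, 0 < prop_total v Rs c, prop_total v Rs c <= B & lamQ c <= lam]) ->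
  (forall c a, P c -> a \in Rs -> ~~ Q a -> 0 < propensity v Rs c a -> P (apply_r a c)) ->
  forall T c, P c -> lam^-1 * (1 - (1 - lam / B) ^+ T) <= Ssum c T.
Proof.
move=> l0 lB HP Hcl.
have B0 : 0 < B by apply: lt_le_trans lB.
have rho0 : 0 <= 1 - lam / B by rewrite subr_ge0 ler_pdivrMr // mul1r.
have rho1 : 1 - lam / B <= 1 by rewrite lerBlDr lerDl divr_ge0 // ltW.
elim=> [|T IH] c Pc; first by rewrite expr0 subrr mulr0 /Ssum big_ord0.
case: (HP c Pc) => nAI Pi0 PiB lqle.
rewrite SsumS.
set Pi := prop_total v Rs c.
set rest := \sum_(a <- Rs | ~~ Q a) propensity v Rs c a.
have Pi_eq : Pi = lamQ c + rest by rewrite /Pi prop_split.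
have restge : Pi - lam <= rest by lra.
have x01 : 0 <= (1 - lam / B) ^+ T <= 1 by rewrite exprn_ge0 // exprn_ile1.
set L := lam^-1 * (1 - (1 - lam / B) ^+ T).
have L0 : 0 <= L by rewrite /L; apply: mulr_ge0; [rewrite invr_ge0; exact: ltW|rewrite subr_ge0 exprn_ile1].
have key : rest / Pi * L <= \sum_(a <- Rs) w c a * Ssum (apply_r a c) T.
  rewrite /rest !mulr_suml big_mkcond /= big_seq [X in _ <= X]big_seq.
  apply: ler_sum => a aRs.
  case: ifP => Qa; last by rewrite mulr_ge0 ?w_ge0 ?Ssum_ge0.
  have := propensity_ge0 c a; rewrite le0r => /orP[/eqP p0|ppos].
    by rewrite p0 !mul0r mulr_ge0 ?w_ge0 ?Ssum_ge0.
  have Pac := Hcl c a Pc aRs Qa ppos.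
  have [nAI' _ _ _] := HP _ Pac.
  have -> : w c a = propensity v Rs c a / Pi by rewrite /w /cond nAI Qa nAI'.
  by rewrite ler_wpM2l ?IH // divr_ge0 ?propensity_ge0 ?ltW.
apply: (le_trans (_ : _ <= Pi^-1 + rest / Pi * L)); last by rewrite lerD2l.
rewrite exprSr /L.
exact: real_lb.
Qed.

End Generic.

Lemma pow_small (rho : R) : 0 <= rho < 1 -> exists T, rho ^+ T <= 2^-1.
Proof.
move=> /andP[r0 r1].
set d := 1 - rho.
have d0 : 0 < d by rewrite /d subr_gt0.
have bern : forall T, rho ^+ T * (1 + T%:R * d) <= 1.
  elim=> [|T IH]; first by rewrite expr0 mul0r addr0 mulr1.
  have y0 : 0 <= rho ^+ T by rewrite exprn_ge0.
  have e : rho = 1 - d by rewrite /d; ring.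
  have h : 0 <= rho ^+ T * (d * d) * (T%:R + 1).
    apply: mulr_ge0; first by apply: mulr_ge0 => //; apply: mulr_ge0; exact: ltW.
    by apply: addr_ge0.
  have -> : rho ^+ T.+1 * (1 + T.+1%:R * d) =
     rho ^+ T * (1 + T%:R * d) - rho ^+ T * (d * d) * (T%:R + 1).
    by rewrite exprSr -addn1 natrD {2}e; ring.
  lra.
exists (Num.truncn (d^-1)).+1.
have := bern (Num.truncn (d^-1)).+1.
have := truncnS_gt (d^-1).
set N := (Num.truncn (d^-1)).+1%:R => hN hb.
have hNd : 1 <= N * d by rewrite -ler_pdivrMr // mul1r ltW.
set y := rho ^+ (Num.truncn (d^-1)).+1 in hb *.
have y0 : 0 <= y by rewrite exprn_ge0.
have : y * 2 <= y * (1 + N * d) by rewrite ler_wpM2l // -lerBlDl; lra.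
move=> h2.
have : y * 2 <= 1 by lra.
move=> h3; rewrite -(ler_pM2r (_ : 0 < 2)) // mulVf //; lra.
Qed.


Definition Sp : finType := (bool * bool)%type.
Definition T1 : Sp := (false, false).
Definition T2 : Sp := (false, true).
Definition KK : Sp := (true, false).
Definition DD : Sp := (true, true).

Definition mk (a b c d : nat) : config Sp :=
  [ffun s : Sp => match s with
   | (false, false) => a | (false, true) => b | (true, false) => c | (true, true) => d end].

Definition q1 : reaction Sp := (mk 1 0 0 0, mk 0 0 0 1).
Definition q2 : reaction Sp := (mk 0 1 0 0, mk 0 0 0 1).
Definition rx : reaction Sp := (mk 1 0 1 0, mk 0 1 1 0).
Definition ry : reaction Sp := (mk 0 1 1 0, mk 1 0 1 0).
Definition re : reaction Sp := (mk 0 0 2 0, mk 0 0 0 2).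
Definition vd (r : config Sp) : reaction Sp := (r, r).
Definition vD := vd (mk 0 0 0 1).
Definition vDD := vd (mk 0 0 0 2).

Definition Rs : seq (reaction Sp) :=
  [:: q1; q2; rx; ry; re; vd (mk 0 0 1 0); vD; vd (mk 2 0 0 0); vd (mk 1 1 0 0);
      vd (mk 1 0 0 1); vd (mk 0 2 0 0); vd (mk 0 1 0 1); vd (mk 0 0 1 1); vDD].

Lemma mkE a b c d s : mk a b c d s =
  match s with
   | (false, false) => a | (false, true) => b | (true, false) => c | (true, true) => d end.
Proof. by rewrite ffunE. Qed.

Lemma mkT1 a b c d : mk a b c d T1 = a. Proof. by rewrite mkE. Qed.
Lemma mkT2 a b c d : mk a b c d T2 = b. Proof. by rewrite mkE. Qed.
Lemma mkK a b c d : mk a b c d KK = c. Proof. by rewrite mkE. Qed.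
Lemma mkD a b c d : mk a b c d DD = d. Proof. by rewrite mkE. Qed.
Definition mkC := (mkT1, mkT2, mkK, mkD).

Lemma conf_eta (c : config Sp) : c = mk (c T1) (c T2) (c KK) (c DD).
Proof. by apply/ffunP => -[[] []]; rewrite mkE. Qed.

Lemma mk_inj a b c d a' b' c' d' : mk a b c d = mk a' b' c' d' ->
  [/\ a = a', b = b', c = c' & d = d'].
Proof.
move=> H; split.
- by move: (congr1 (fun f : config Sp => f T1) H); rewrite !mkC.
- by move: (congr1 (fun f : config Sp => f T2) H); rewrite !mkC.
- by move: (congr1 (fun f : config Sp => f KK) H); rewrite !mkC.
- by move: (congr1 (fun f : config Sp => f DD) H); rewrite !mkC.
Qed.

Lemma sum4 (F : Sp -> nat) : (\sum_(s : Sp) F s = F T1 + F T2 + F KK + F DD)%N.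
Proof.
rewrite (bigD1 T1) // (bigD1 T2) // (bigD1 KK) // (bigD1 DD) // big1.
  by rewrite /= addn0 !addnA.
by case=> [[] []].
Qed.

Lemma prod4 (F : Sp -> nat) : (\prod_(s : Sp) F s = F T1 * F T2 * F KK * F DD)%N.
Proof.
rewrite (bigD1 T1) // (bigD1 T2) // (bigD1 KK) // (bigD1 DD) // big1.
  by rewrite /= muln1 !mulnA.
by case=> [[] []].
Qed.

Lemma norm1_mk a b c d : norm1 (mk a b c d) = (a + b + c + d)%N.
Proof. by rewrite /norm1 sum4 !mkC. Qed.

Lemma norm1E (c : config Sp) : norm1 c = (c T1 + c T2 + c KK + c DD)%N.
Proof. by rewrite /norm1 sum4. Qed.

Lemma app4 (a : reaction Sp) c : applicable a c =
  [&& a.1 T1 <= c T1, a.1 T2 <= c T2, a.1 KK <= c KK & a.1 DD <= c DD]%N.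
Proof.
apply/forallP/and4P => [H|[h1 h2 h3 h4] [[] []]] //.
Qed.

Lemma apply_r_eta (a : reaction Sp) c : apply_r a c =
  mk (c T1 - a.1 T1 + a.2 T1) (c T2 - a.1 T2 + a.2 T2)
     (c KK - a.1 KK + a.2 KK) (c DD - a.1 DD + a.2 DD).
Proof. by apply/ffunP => -[[] []]; rewrite mkE ffunE. Qed.

Lemma apply_void (r : config Sp) c : applicable (r, r) c -> apply_r (r, r) c = c.
Proof.
move=> /forallP H; apply/ffunP => s; rewrite ffunE /= subnK //; exact: H.
Qed.

Lemma Rs_all (P : reaction Sp -> Prop) :
  P q1 -> P q2 -> P rx -> P ry -> P re -> (forall r, P (r, r)) ->
  forall a, a \in Rs -> P a.
Proof.
move=> H1 H2 H3 H4 H5 Hv a; rewrite !inE.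
by repeat (case/orP; [move/eqP->; first [assumption|apply: Hv]|]); move/eqP->; apply: Hv.
Qed.

Definition enc (r : config Sp) := (r T1, r T2, r KK, r DD).
Lemma enc_mk a b c d : enc (mk a b c d) = (a, b, c, d).
Proof. by rewrite /enc !mkC. Qed.

Lemma uniq_fst : uniq (map fst Rs).
Proof.
apply: (@map_uniq _ _ enc).
by rewrite /Rs /q1 /q2 /rx /ry /re /vD /vDD /vd /= !enc_mk.
Qed.

Lemma inj_of_uniq_map (T U : eqType) (f : T -> U) s :
  uniq (map f s) -> {in s &, injective f}.
Proof.
elim: s => //= x s IH /andP[nx us] a b.
rewrite !inE => /orP[/eqP->|ai] /orP[/eqP->|bi] //.
- by move=> e; move: nx; rewrite e map_f.
- by move=> e; move: nx; rewrite -e map_f.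
- exact: IH.
Qed.

Lemma Rs_inj a b : a \in Rs -> b \in Rs -> a.1 = b.1 -> a = b.
Proof. by move=> ha hb; apply: (inj_of_uniq_map uniq_fst). Qed.

Lemma uniq_Rs : uniq Rs.
Proof. exact: (map_uniq uniq_fst). Qed.

Lemma size_Rof a : a \in Rs -> size (Rof Rs a.1) = 1%N.
Proof.
move=> ha; rewrite /Rof size_filter.
have -> : count (fun b : reaction Sp => b.1 == a.1) Rs = count_mem a.1 (map fst Rs).
  by rewrite count_map.
by rewrite count_uniq_mem ?uniq_fst // map_f.
Qed.

Lemma prop_app (S : finType) (v : R) (Rs' : seq (reaction S)) c a :
  0 < propensity v Rs' c a -> applicable a c.
Proof.
apply: contraTT => /forallPn [s]; rewrite -ltnNge => lt.
by rewrite /propensity (bigD1 s) //= bin_small // mul0n !mul0r ltxx.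
Qed.

Lemma q1_in : q1 \in Rs. Proof. by rewrite /Rs !inE eqxx. Qed.
Lemma q2_in : q2 \in Rs. Proof. by rewrite /Rs !inE eqxx !orbT. Qed.
Lemma rx_in : rx \in Rs. Proof. by rewrite /Rs !inE eqxx !orbT. Qed.
Lemma ry_in : ry \in Rs. Proof. by rewrite /Rs !inE eqxx !orbT. Qed.
Lemma re_in : re \in Rs. Proof. by rewrite /Rs !inE eqxx !orbT. Qed.
Lemma vD_in : vD \in Rs. Proof. by rewrite /Rs !inE eqxx !orbT. Qed.
Lemma vDD_in : vDD \in Rs. Proof. by rewrite /Rs !inE eqxx !orbT. Qed.

Lemma prop_q1 v c : propensity v Rs c q1 = (c T1)%:R.
Proof.
by rewrite /propensity size_Rof ?q1_in // prod4 /q1 /= !mkC bin1 !bin0 !muln1 norm1_mk /= expr0 !divr1.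
Qed.

Lemma prop_q2 v c : propensity v Rs c q2 = (c T2)%:R.
Proof.
by rewrite /propensity size_Rof ?q2_in // prod4 /q2 /= !mkC bin1 !bin0 !muln1 mul1n norm1_mk /= expr0 !divr1.
Qed.

Lemma prop_vD v c : propensity v Rs c vD = (c DD)%:R.
Proof.
by rewrite /propensity size_Rof ?vD_in // prod4 /vD /vd /= !mkC bin1 !bin0 !mul1n norm1_mk /= expr0 !divr1.
Qed.

Lemma prop_e v c : propensity v Rs c re = ('C(c KK, 2))%:R / v.
Proof.
by rewrite /propensity size_Rof ?re_in // prod4 /re /= !mkC !bin0 !mul1n muln1 norm1_mk /= expr1 divr1.
Qed.

Lemma step_cases a c : a \in Rs -> applicable a c ->
  (apply_r a c = c /\ a.1 = a.2) \/
  ([/\ a = q1, (1 <= c T1)%N & apply_r a c = mk ((c T1).-1) (c T2) (c KK) ((c DD).+1)] \/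
  ([/\ a = q2, (1 <= c T2)%N & apply_r a c = mk (c T1) ((c T2).-1) (c KK) ((c DD).+1)] \/
  ([/\ a = rx, (1 <= c T1)%N, (1 <= c KK)%N & apply_r a c = mk ((c T1).-1) ((c T2).+1) (c KK) (c DD)] \/
  ([/\ a = ry, (1 <= c T2)%N, (1 <= c KK)%N & apply_r a c = mk ((c T1).+1) ((c T2).-1) (c KK) (c DD)] \/
   [/\ a = re, (2 <= c KK)%N & apply_r a c = mk (c T1) (c T2) (c KK - 2) (c DD + 2)])))).
Proof.
move: a; apply: Rs_all; rewrite ?app4 /= ?mkC.
- move=> /and4P[h _ _ _]; right; left; split => //.
  by rewrite apply_r_eta /= !mkC; congr mk; lia.
- move=> /and4P[_ h _ _]; right; right; left; split => //.
  by rewrite apply_r_eta /= !mkC; congr mk; lia.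
- move=> /and4P[h _ h' _]; right; right; right; left; split => //.
  by rewrite apply_r_eta /= !mkC; congr mk; lia.
- move=> /and4P[_ h h' _]; right; right; right; right; left; split => //.
  by rewrite apply_r_eta /= !mkC; congr mk; lia.
- move=> /and4P[_ _ h _]; right; right; right; right; right; split => //.
  by rewrite apply_r_eta /= !mkC; congr mk; lia.
- by move=> r Ha; left; rewrite apply_void.
Qed.

Lemma norm_step a c : a \in Rs -> applicable a c -> norm1 (apply_r a c) = norm1 c.
Proof.
move=> ha app; have := step_cases ha app.
case=> [[-> _]|[[_ h ->]|[[_ h ->]|[[_ h h' ->]|[[_ h h' ->]|[_ h ->]]]]]] //;
  rewrite norm1_mk norm1E; lia.
Qed.

Lemma norm_reach c c' : reach Rs c c' -> norm1 c' = norm1 c.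
Proof. by elim=> // c0 a c1 ha app _ ->; rewrite norm_step. Qed.

Ltac pick :=
  first [ exists q1; [exact q1_in|reflexivity] | exists q2; [exact q2_in|reflexivity]
        | exists rx; [exact rx_in|reflexivity] | exists ry; [exact ry_in|reflexivity]
        | exists re; [exact re_in|reflexivity]
        | exists (vd (mk 0 0 1 0)); [by rewrite /Rs !inE eqxx ?orbT|reflexivity]
        | exists (vd (mk 0 0 0 1)); [by rewrite /Rs !inE eqxx ?orbT|reflexivity]
        | exists (vd (mk 2 0 0 0)); [by rewrite /Rs !inE eqxx ?orbT|reflexivity]
        | exists (vd (mk 1 1 0 0)); [by rewrite /Rs !inE eqxx ?orbT|reflexivity]
        | exists (vd (mk 1 0 0 1)); [by rewrite /Rs !inE eqxx ?orbT|reflexivity]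
        | exists (vd (mk 0 2 0 0)); [by rewrite /Rs !inE eqxx ?orbT|reflexivity]
        | exists (vd (mk 0 1 0 1)); [by rewrite /Rs !inE eqxx ?orbT|reflexivity]
        | exists (vd (mk 0 0 1 1)); [by rewrite /Rs !inE eqxx ?orbT|reflexivity]
        | exists (vd (mk 0 0 0 2)); [by rewrite /Rs !inE eqxx ?orbT|reflexivity] ].

Lemma q1_NV : q1 \in NV Rs.
Proof.
rewrite mem_filter q1_in andbT /is_void; apply/negP => /eqP /mk_inj [] //.
Qed.

Lemma is_crn_Rs : is_crn Rs.
Proof.
split; [split|].
- exact: uniq_Rs.
- move=> a; rewrite !inE.
  by repeat (case/orP; [move/eqP->; rewrite /q1 /q2 /rx /ry /re /vD /vDD /vd /= !norm1_mk //|]);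
    move/eqP->; rewrite /vDD /vd /= !norm1_mk.
- move=> r /andP[h1 h2]; rewrite (conf_eta r) in h1 h2 *; rewrite norm1_mk in h1 h2.
  move: (r T1) (r T2) (r KK) (r DD) h1 h2.
  move=> [|[|[|a]]] [|[|[|b]]] [|[|[|c]]] [|[|[|d]]] h1 h2; try (exfalso; lia); pick.
- by move=> a ha _ b hb e; exact: Rs_inj hb ha e.
- by apply/eqP => H; move: q1_NV; rewrite H.
exists 1%N => c c' _ H; rewrite mul1n (norm_reach H) //.
Qed.


Definition good (c0 : config Sp) := exists m, c0 = mk 1 0 2 m.+1.
Definition dead (c : config Sp) := c T1 = 0%N /\ c T2 = 0%N.
Definition II : interface Sp := @Interface Sp (config Sp) id (fun c0 c => good c0 /\ dead c).

Lemma dead_step a c : a \in Rs -> applicable a c -> dead c -> dead (apply_r a c).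
Proof.
move=> ha app [d1 d2]; have := step_cases ha app.
case=> [[-> _]|[[_ h ->]|[[_ h ->]|[[_ h h' ->]|[[_ h h' ->]|[_ h ->]]]]]] //;
  rewrite /dead !mkC; lia.
Qed.

Lemma dead_reach c c' : reach Rs c c' -> dead c -> dead c'.
Proof. by elim=> // c0 a c1 ha app _ IH d; apply: IH; apply: dead_step. Qed.

Lemma stab_dead c0 c : good c0 -> dead c -> stab Rs (Ztarget II c0) c.
Proof.
move=> g d; split => [|c' r]; first by [].
by split => //; apply: dead_reach r d.
Qed.

Lemma stab_dead' c0 c : stab Rs (Ztarget II c0) c -> dead c.
Proof. by case=> -[]. Qed.

Definition InvC (c : config Sp) :=
  [/\ (c T1 + c T2 <= 1)%N, (1 <= c DD)%N & (c KK = 0%N \/ c KK = 2%N)].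

Lemma Inv_step a c : a \in Rs -> applicable a c -> InvC c -> InvC (apply_r a c).
Proof.
move=> ha app [i1 i2 i3]; have := step_cases ha app.
case=> [[-> _]|[[_ h ->]|[[_ h ->]|[[_ h h' ->]|[[_ h h' ->]|[_ h ->]]]]]] //;
  rewrite /InvC !mkC; split; lia.
Qed.

Lemma exec_inv (P : config Sp -> Prop) cs al : is_exec Rs cs al ->
  (forall a c, a \in Rs -> applicable a c -> P c -> P (apply_r a c)) ->
  forall t0, P (cs t0) -> forall t, (t0 <= t)%N -> P (cs t).
Proof.
move=> [_ Hex] Hcl t0 P0; elim=> [|t IH]; first by rewrite leqn0 => /eqP <-.
rewrite leq_eqVlt => /orP[/eqP <- //|lt].
have [h1 h2 ->] := Hex t; apply: Hcl => //; exact: IH.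
Qed.

Lemma K0_step a c : a \in Rs -> applicable a c -> c KK = 0%N -> (apply_r a c) KK = 0%N.
Proof.
move=> ha app k; have := step_cases ha app.
case=> [[-> _]|[[_ h ->]|[[_ h ->]|[[_ h h' ->]|[[_ h h' ->]|[_ h ->]]]]]] //;
  rewrite !mkC; lia.
Qed.

Lemma K0T2_step a c : a \in Rs -> applicable a c -> c KK = 0%N /\ c T2 = 0%N ->
  (apply_r a c) KK = 0%N /\ (apply_r a c) T2 = 0%N.
Proof.
move=> ha app [k t]; have := step_cases ha app.
case=> [[-> _]|[[_ h ->]|[[_ h ->]|[[_ h h' ->]|[[_ h h' ->]|[_ h ->]]]]]] //;
  rewrite !mkC; lia.
Qed.

Lemma K0T1_step a c : a \in Rs -> applicable a c -> c KK = 0%N /\ c T1 = 0%N ->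
  (apply_r a c) KK = 0%N /\ (apply_r a c) T1 = 0%N.
Proof.
move=> ha app [k t]; have := step_cases ha app.
case=> [[-> _]|[[_ h ->]|[[_ h ->]|[[_ h h' ->]|[[_ h h' ->]|[_ h ->]]]]]] //;
  rewrite !mkC; lia.
Qed.

Lemma exec_good_inv cs al : is_exec Rs cs al -> good (cs 0%N) -> forall t, InvC (cs t).
Proof.
move=> ex [m e] t; apply: (exec_inv ex Inv_step (t0:=0)) => //.
by rewrite e /InvC !mkC; split; lia.
Qed.

Lemma app_q1 c : applicable q1 c = (1 <= c T1)%N.
Proof. by rewrite app4 /q1 /= !mkC /= !andbT. Qed.
Lemma app_q2 c : applicable q2 c = (1 <= c T2)%N.
Proof. by rewrite app4 /q2 /= !mkC /= !andbT. Qed.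
Lemma app_re c : applicable re c = (2 <= c KK)%N.
Proof. by rewrite app4 /re /= !mkC /= !andbT. Qed.

Lemma apply_q1 c : apply_r q1 c = mk (c T1 - 1) (c T2) (c KK) (c DD + 1).
Proof. by rewrite apply_r_eta /= !mkC !subn0 !addn0. Qed.
Lemma apply_q2 c : apply_r q2 c = mk (c T1) (c T2 - 1) (c KK) (c DD + 1).
Proof. by rewrite apply_r_eta /= !mkC !subn0 !addn0. Qed.
Lemma apply_re c : apply_r re c = mk (c T1) (c T2) (c KK - 2) (c DD + 2).
Proof. by rewrite apply_r_eta /= !mkC !subn0 !addn0. Qed.

Lemma exec_dead cs al : is_exec Rs cs al -> weakly_fair Rs cs al -> good (cs 0%N) ->
  exists t, dead (cs t).
Proof.
move=> ex wf g; have inv := exec_good_inv ex g.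
have [_ Hex] := ex.
have [t2 K0] : exists t2, (cs t2) KK = 0%N.
  have app0 : applicable re (cs 0%N).
    by case: g => m ->; rewrite app_re !mkC.
  have [t1 _ [h|h]] := wf 0%N re re_in app0.
    exists t1.+1; have [_ app ->] := Hex t1; rewrite h apply_re mkC.
    have [_ _ k] := inv t1; move: app; rewrite h app_re; lia.
  exists t1; have [_ _ k] := inv t1; move: h; rewrite app_re; lia.
have [i1 _ _] := inv t2.
have [d|[t1p|t2p]] : dead (cs t2) \/ ((cs t2) T1 = 1%N \/ (cs t2) T2 = 1%N).
- rewrite /dead; lia.
- by exists t2.
- have P0 : (cs t2) KK = 0%N /\ (cs t2) T2 = 0%N by split => //; lia.
  have Pf := exec_inv ex K0T2_step P0.
  have app : applicable q1 (cs t2) by rewrite app_q1 t1p.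
  have [t3 le [h|h]] := wf t2 q1 q1_in app.
    exists t3.+1; have [_ app' ->] := Hex t3; rewrite h apply_q1 /dead !mkC.
    have [i1' _ _] := inv t3; have [_ z] := Pf t3 le; lia.
  exists t3; have [_ z] := Pf t3 le; move: h; rewrite app_q1 /dead; lia.
- have P0 : (cs t2) KK = 0%N /\ (cs t2) T1 = 0%N by split => //; lia.
  have Pf := exec_inv ex K0T1_step P0.
  have app : applicable q2 (cs t2) by rewrite app_q2 t2p.
  have [t3 le [h|h]] := wf t2 q2 q2_in app.
    exists t3.+1; have [_ app' ->] := Hex t3; rewrite h apply_q2 /dead !mkC.
    have [i1' _ _] := inv t3; have [_ z] := Pf t3 le; lia.
  exists t3; have [_ z] := Pf t3 le; move: h; rewrite app_q2 /dead; lia.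
Qed.

Lemma stably_correct_Rs : stably_correct Rs II.
Proof.
move=> cs al ex wf [c [_ [g _]]].
have [t d] := exec_dead ex wf g.
by exists t; apply: stab_dead.
Qed.


Lemma sum_ge_term (T : eqType) (s : seq T) (P : pred T) (F : T -> R) a :
  a \in s -> P a -> (forall b, 0 <= F b) -> F a <= \sum_(b <- s | P b) F b.
Proof.
move=> ha Pa F0; rewrite (big_rem a) //= Pa lerDl.
by apply: sumr_ge0 => b _.
Qed.

Lemma prop_total_ge v c a : 0 <= v -> a \in Rs -> propensity v Rs c a <= prop_total v Rs c.
Proof.
move=> v0 ha; rewrite /prop_total.
have := @sum_ge_term _ Rs xpredT (propensity v Rs c) a ha isT.
by apply => b; apply: propensity_ge0.
Qed.

Definition Qs : pred (reaction Sp) := fun a => (a == q1) || (a == q2).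
Definition rhoS : config Sp -> pred (reaction Sp) := fun _ => Qs.

Lemma q2_NV : q2 \in NV Rs.
Proof.
rewrite mem_filter q2_in andbT /is_void; apply/negP => /eqP /mk_inj [] //.
Qed.

Lemma rhoS_policy : is_runtime_policy Rs rhoS.
Proof. by move=> c a; rewrite /rhoS /Qs => /orP[]/eqP->; [exact: q1_NV|exact: q2_NV]. Qed.

Lemma TC_Qs_le v (c : config Sp) : 0 < v -> (1 <= c DD)%N -> (TC v Rs Qs c <= 1%:E)%E.
Proof.
move=> v0 hD; have v0' := ltW v0.
apply: TC_le => // T.
case: (boolP (AI Rs Qs c)) => H.
  apply: le_trans (Ssum_AI _ _ H) _ => //.
  have : 1 <= prop_total v Rs c.
    apply: le_trans (prop_total_ge c v0' vD_in); rewrite prop_vD ler1n //.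
  move=> h1; rewrite invf_le1 //; lra.
rewrite -[1]invr1; apply: (Ssum_ub v0' ltr01) => //.
move=> c' /allPn [a ha]; rewrite negb_imply negbK => /andP[Qa app].
rewrite /lamQ; apply: le_trans _ (sum_ge_term ha Qa (propensity_ge0 Rs v0' c')).
move: Qa app; rewrite /Qs => /orP[]/eqP->.
  by rewrite app_q1 prop_q1 ler1n.
by rewrite app_q2 prop_q2 ler1n.
Qed.

Lemma round0 cs al sigma rho : round Rs cs al sigma rho 0 = Some 0%N.
Proof. by []. Qed.

Lemma round1 cs al sigma rho :
  round Rs cs al sigma rho 1 = tau Rs cs al (sigma 0%N) (rho (cs (sigma 0%N))).
Proof. by []. Qed.

Lemma stop_dead cs al t0 t1 : is_exec Rs cs al -> (forall t, InvC (cs t)) ->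
  tau_stop Rs cs al t0 Qs t1 -> exists2 u, (u <= t1)%N & dead (cs u).
Proof.
move=> [_ Hex] inv /andP[lt /orP[Qa|]].
  exists t1 => //.
  have e : t1 = (t1.-1).+1 by rewrite prednK //; apply: leq_ltn_trans lt.
  have [_ app E] := Hex t1.-1; rewrite e E.
  have [i1 _ _] := inv t1.-1.
  move: Qa app; rewrite /Qs => /orP[]/eqP->.
    by rewrite app_q1 apply_q1 /dead !mkC; lia.
  by rewrite app_q2 apply_q2 /dead !mkC; lia.
move=> /existsP [u /andP[_ /allP H]].
exists u; first by rewrite -ltnS ltn_ord.
have := H q1 q1_in; have := H q2 q2_in.
rewrite /Qs eqxx orbT /= app_q2 => h2.
rewrite eqxx /= app_q1 => h1.
by rewrite /dead; lia.
Qed.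

Lemma RT_exec_le v cs al sigma : 0 < v -> is_exec Rs cs al -> weakly_fair Rs cs al ->
  good (cs 0%N) -> (RT_exec v Rs II cs al sigma rhoS <= 1%:E)%E.
Proof.
move=> v0 ex wf g.
have inv := exec_good_inv ex g.
have [t d] := exec_dead ex wf g.
have [ts [Hts [Sts mints]]] := least_some (P := fun t => `[< stab Rs (Ztarget II (cs 0%N)) (cs t) >]) (n := t)
  (asboolT (stab_dead g d)).
rewrite /RT_exec /stab_step Hts.
set P := fun i => if round Rs cs al sigma rhoS i is Some ti then (ts <= ti)%N else true.
have P1 : P 1%N.
  rewrite /P round1; case Ht: (tau _ _ _ _ _) => [t1|] //.
  have [st _] := least_spec Ht.
  have [u le du] := stop_dead ex inv st.
  apply: leq_trans le; apply: mints; exact: asboolT (stab_dead g du).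
have [istar [Hi [_ mini]]] := least_some P1.
rewrite Hi.
have := mini 1%N P1; case: istar {Hi mini} => [|[|//]] _.
  by rewrite big_ord0 lee_fin ler01.
rewrite big_ord1 round0.
have [_ i2 _] := inv (sigma 0%N).
exact: TC_Qs_le.
Qed.


Section Lower.
Variable m : nat.
Definition cA := mk 1 0 2 m.+1.
Definition cB := mk 0 1 2 m.+1.
Definition cC := mk 0 0 2 m.+2.
Definition cF := mk 0 0 0 m.+4.

Lemma rxA : apply_r rx cA = cB.
Proof. by rewrite apply_r_eta /= !mkC; congr mk; lia. Qed.
Lemma ryB : apply_r ry cB = cA.
Proof. by rewrite apply_r_eta /= !mkC; congr mk; lia. Qed.
Lemma q1A : apply_r q1 cA = cC.
Proof. by rewrite apply_q1 !mkC /cC addn1. Qed.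
Lemma reC : apply_r re cC = cF.
Proof. by rewrite apply_re !mkC /cF addn2. Qed.

Lemma sccAB : scc Rs cA cB.
Proof.
split.
  apply: (reach_step (a:=rx)); rewrite ?rx_in ?rxA //; last exact: reach_refl.
  by rewrite app4 /cA /rx /= !mkC.
apply: (reach_step (a:=ry)); rewrite ?ry_in ?ryB //; last exact: reach_refl.
by rewrite app4 /cB /ry /= !mkC.
Qed.

Lemma sccAA : scc Rs cA cA.
Proof. split; exact: reach_refl. Qed.

Lemma escA a : a \in NV Rs -> escapes Rs cA a -> a = re.
Proof.
rewrite mem_filter => /andP[nv ha]; move: a ha nv; apply: Rs_all.
- by move=> _ [_ H]; have [] := H _ sccAB; rewrite app_q1 /cB mkC.
- by move=> _ [_ H]; have [] := H _ sccAA; rewrite app_q2 /cA mkC.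
- by move=> _ [_ H]; have [_] := H _ sccAA; rewrite rxA; case; exact: sccAB.
- by move=> _ [_ H]; have [] := H _ sccAA; rewrite app4 /cA /ry /= !mkC.
- by [].
- by move=> r; rewrite /is_void eqxx.
Qed.

Variable M : nat.
Definition al_ex (t : nat) : reaction Sp :=
  if (t < M)%N then vD else if t == M then q1 else if t == M.+1 then re
  else if odd t then vD else vDD.
Definition cs_ex (t : nat) : config Sp :=
  if (t <= M)%N then cA else if t == M.+1 then cC else cF.

Lemma al_late t : (M.+2 <= t)%N -> al_ex t = if odd t then vD else vDD.
Proof.
move=> h; rewrite /al_ex ifF; last by apply/negbTE; rewrite -leqNgt; lia.
rewrite ifF; last by apply/negbTE/eqP; lia.
by rewrite ifF //; apply/negbTE/eqP; lia.
Qed.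

Lemma cs_late t : (M.+2 <= t)%N -> cs_ex t = cF.
Proof.
move=> h; rewrite /cs_ex ifF; last by apply/negbTE; rewrite -ltnNge; lia.
by rewrite ifF //; apply/negbTE/eqP; lia.
Qed.

Lemma app_vD c : applicable vD c = (1 <= c DD)%N.
Proof. by rewrite app4 /vD /vd /= !mkC. Qed.
Lemma app_vDD c : applicable vDD c = (2 <= c DD)%N.
Proof. by rewrite app4 /vDD /vd /= !mkC. Qed.

Lemma al_M1 : al_ex M.+1 = re.
Proof.
rewrite /al_ex ifF; last by apply/negbTE; rewrite -leqNgt; lia.
by rewrite ifF ?eqxx //; apply/negbTE/eqP; lia.
Qed.
Lemma al_M : al_ex M = q1.
Proof. by rewrite /al_ex ltnn eqxx. Qed.
Lemma al_lt t : (t < M)%N -> al_ex t = vD.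
Proof. by move=> h; rewrite /al_ex h. Qed.
Lemma cs_M1 : cs_ex M.+1 = cC.
Proof. by rewrite /cs_ex ltnn eqxx. Qed.
Lemma cs_le t : (t <= M)%N -> cs_ex t = cA.
Proof. by move=> h; rewrite /cs_ex h. Qed.

Lemma exec_ex : is_exec Rs cs_ex al_ex.
Proof.
split; first by rewrite cs_le // norm1_mk.
move=> t.
case: (ltngtP t M) => h.
- rewrite al_lt // !cs_le //; last exact: ltnW.
  split; [exact: vD_in|by rewrite app_vD /cA mkC|].
  by rewrite /vD /vd apply_void // -/vD app_vD /cA mkC.
- have [e|e] : t = M.+1 \/ (M.+2 <= t)%N by lia.
    rewrite e al_M1 cs_M1 cs_late //.
    split; [exact: re_in|by rewrite app_re /cC mkC|by rewrite reC].
  have h2 : (M.+2 <= t.+1)%N by lia.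
  rewrite al_late // (cs_late e) (cs_late h2).
  case: (odd t).
    split; [exact: vD_in|by rewrite app_vD /cF mkC|].
    by rewrite /vD /vd apply_void // -/vD app_vD /cF mkC.
  split; [exact: vDD_in|by rewrite app_vDD /cF mkC|].
  by rewrite /vDD /vd apply_void // -/vDD app_vDD /cF mkC.
- subst t; rewrite al_M cs_le // cs_M1.
  split; [exact: q1_in|by rewrite app_q1 /cA mkC|by rewrite q1A].
Qed.

Lemma applicable_cF a : a \in Rs -> applicable a cF -> a = vD \/ a = vDD.
Proof.
rewrite !inE.
repeat (case/orP; [move/eqP->; rewrite app4 /q1 /q2 /rx /ry /re /vd /cF /= !mkC //; try by [left|right] |]).
by move/eqP->; right.
Qed.

Lemma wf_ex : weakly_fair Rs cs_ex al_ex.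
Proof.
move=> t a ha app.
set t0 := maxn t M.+2.
have ht0 : (t <= t0)%N /\ (M.+2 <= t0)%N by rewrite /t0; lia.
case: (boolP (applicable a cF)) => hF.
  case: (applicable_cF ha hF) => ->.
    exists t0.*2.+1; first by rewrite -addnn; lia.
    by left; rewrite al_late /= ?odd_double //; rewrite -addnn; lia.
  exists t0.*2; first by rewrite -addnn; lia.
  by left; rewrite al_late ?odd_double //; rewrite -addnn; lia.
exists t0; first by case: ht0.
by right; rewrite cs_late //; case: ht0.
Qed.

Lemma valid_ex : valid II (cs_ex 0%N).
Proof.
exists cF; split; first by rewrite norm1_mk.
split; first by exists m; rewrite cs_le.
by rewrite /dead /cF !mkC.
Qed.

Lemma stab_step_ex : stab_step Rs II cs_ex = Some M.+1.
Proof.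
have g : good (cs_ex 0%N) by exists m; rewrite cs_le.
have dC : dead (cs_ex M.+1) by rewrite cs_M1 /dead /cC !mkC.
have st : `[< stab Rs (Ztarget II (cs_ex 0%N)) (cs_ex M.+1) >].
  by apply/asboolP; apply: stab_dead g dC.
have [ts [Hts [Sts mints]]] :=
  least_some (P := fun t => `[< stab Rs (Ztarget II (cs_ex 0%N)) (cs_ex t) >]) (n := M.+1) st.
rewrite /stab_step Hts; congr Some.
have le := mints _ st.
move: Sts => /asboolP /stab_dead' d.
have : ~~ (ts <= M)%N by apply/negP => h; move: d; rewrite cs_le // /dead /cA !mkC; case.
lia.
Qed.

Lemma tau_empty (rho : config Sp -> pred (reaction Sp)) t : (t <= M)%N ->
  (forall a, a \in Rs -> ~~ rho cA a) ->
  tau Rs cs_ex al_ex t (rho (cs_ex t)) = Some t.+1.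
Proof.
move=> ht H0; rewrite cs_le //.
have stop : tau_stop Rs cs_ex al_ex t (rho cA) t.+1.
  rewrite /tau_stop ltnSn andTb; apply/orP; right; apply/existsP.
  exists (Ordinal (ltnW (ltnSn t.+1))); rewrite leqnn andTb.
  by apply/allP => a ha; rewrite (negbTE (H0 a ha)).
have [s [Hs [Ss mins]]] := least_some stop.
rewrite /tau Hs; congr Some.
have := mins _ stop; move: Ss => /andP[lt _]; lia.
Qed.

Lemma round_empty (rho : config Sp -> pred (reaction Sp)) i : (i <= M.+1)%N ->
  (forall a, a \in Rs -> ~~ rho cA a) ->
  round Rs cs_ex al_ex id rho i = Some i.
Proof.
move=> hi H0; elim: i hi => [//|i IH] hi /=.
rewrite IH; last exact: ltnW.
exact: tau_empty.
Qed.

Lemma Ssum1 v Q (c : config Sp) : Ssum Rs Q v c 1 = (prop_total v Rs c)^-1.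
Proof. by rewrite /Ssum big_ord1 fterm0. Qed.

Lemma RT_case1 v (rho : config Sp -> pred (reaction Sp)) : 0 <= v ->
  (forall a, a \in Rs -> ~~ rho cA a) ->
  ((M.+1%:R * (prop_total v Rs cA)^-1)%:E <= RT_exec v Rs II cs_ex al_ex id rho)%E.
Proof.
move=> v0 H0.
rewrite /RT_exec stab_step_ex.
set P := fun i => if round Rs cs_ex al_ex id rho i is Some ti then (M.+1 <= ti)%N else true.
have PM : P M.+1 by rewrite /P round_empty.
have [istar [Hi [Pi mini]]] := least_some PM.
have ei : istar = M.+1.
  have le := mini _ PM.
  case: (ltngtP istar M.+1) le => // h _.
  move: Pi; rewrite /P round_empty //; last exact: ltnW.
  lia.
rewrite Hi ei.
have -> : ((M.+1%:R * (prop_total v Rs cA)^-1)%:E =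
   \sum_(i < M.+1) ((prop_total v Rs cA)^-1)%:E)%E.
  by rewrite sumEFin sumr_const card_ord mulr_natl.
apply: lee_sum => i _.
rewrite round_empty //; last exact: ltnW (ltn_ord i).
rewrite /= cs_le; last by rewrite -ltnS ltn_ord.
by rewrite -(Ssum1 v (rho cA)); apply: TC_ge.
Qed.

End Lower.

Lemma RT_case2 m v (rho : config Sp -> pred (reaction Sp)) :
  RT_exec v Rs II (cs_ex m 0) (al_ex 0) id rho = TC v Rs (rho (cA m)) (cA m).
Proof.
rewrite /RT_exec stab_step_ex.
set P := fun i => if round Rs (cs_ex m 0) (al_ex 0) id rho i is Some ti then (1 <= ti)%N else true.
have P1 : P 1%N.
  rewrite /P round1; case Ht: (tau _ _ _ _ _) => [t1|] //.
  by have [/andP[lt _] _] := least_spec Ht.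
have [istar [Hi [Pi mini]]] := least_some P1.
have ei : istar = 1%N.
  have := mini _ P1; case: istar {Hi mini} Pi => [|[|//]] //.
rewrite Hi ei big_ord1 round0 /= cs_le //.
Qed.

Lemma TC_re_lb m v (Q : pred (reaction Sp)) : 0 < v ->
  (forall a, a \in Rs -> Q a = (a == re)) -> ((v / 2)%:E <= TC v Rs Q (cA m))%E.
Proof.
move=> v0 HQ; have v0' := ltW v0.
set P := fun c => c = cA m \/ c = cB m \/ c = cC m.
have lamQ_eq : forall c, lamQ Rs Q v c = propensity v Rs c re.
  move=> c; rewrite /lamQ (big_rem re re_in) (HQ re re_in) eqxx big_seq_cond big1; first by rewrite /= addr0.
  move=> a /andP[ha Qa].
  have hr : a \in Rs := mem_rem ha.
  rewrite (HQ a hr) in Qa; move/eqP: Qa => e; subst a.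
  by rewrite mem_rem_uniqF ?uniq_Rs in ha.
have PK : forall c, P c -> c KK = 2%N by move=> c [->|[->|->]]; rewrite mkC.
have pire : forall c, P c -> propensity v Rs c re = v^-1.
  by move=> c Pc; rewrite prop_e PK // binn mul1r.
set B := prop_total v Rs (cA m) + prop_total v Rs (cB m) + prop_total v Rs (cC m).
have Pi_ge : forall c, P c -> v^-1 <= prop_total v Rs c.
  by move=> c Pc; rewrite -(pire c Pc); apply: prop_total_ge => //; exact: re_in.
have T0 := prop_total_ge0 Rs v0'.
have PiB : forall c, P c -> prop_total v Rs c <= B.
  move=> c [->|[->|->]]; rewrite /B.
  - have := T0 (cB m); have := T0 (cC m); lra.
  - have := T0 (cA m); have := T0 (cC m); lra.
  - have := T0 (cA m); have := T0 (cB m); lra.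
have vi0 : 0 < v^-1 by rewrite invr_gt0.
have lB : v^-1 <= B by apply: le_trans (Pi_ge _ _) (PiB _ _); left.
have HP : forall c, P c -> [/\ ~~ AI Rs Q c, 0 < prop_total v Rs c,
     prop_total v Rs c <= B & lamQ Rs Q v c <= v^-1].
  move=> c Pc; split.
  - apply/allPn; exists re; first exact: re_in.
    by rewrite HQ ?re_in // eqxx /= negbK app_re PK.
  - exact: lt_le_trans vi0 (Pi_ge _ Pc).
  - exact: PiB.
  - by rewrite lamQ_eq pire.
have Hcl : forall c a, P c -> a \in Rs -> ~~ Q a -> 0 < propensity v Rs c a -> P (apply_r a c).
  move=> c a Pc ha nQ /prop_app app.
  case: (step_cases ha app) => [[-> _] //|].
  case=> [[_ h ->]|[[_ h ->]|[[_ h h' ->]|[[_ h h' ->]|[e _ _]]]]].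
  - case: Pc h => [->|[->|->]]; rewrite !mkC // => _.
    by right; right.
  - case: Pc h => [->|[->|->]]; rewrite !mkC // => _.
    by right; right.
  - case: Pc h h' => [->|[->|->]]; rewrite !mkC // => _ _.
    by right; left.
  - case: Pc h h' => [->|[->|->]]; rewrite !mkC // => _ _.
    by left.
  - by move: nQ; rewrite e HQ ?re_in // eqxx.
have LB := Ssum_lb v0' vi0 lB HP Hcl.
set rho := 1 - v^-1 / B.
have hrho : 0 <= rho < 1.
  have B0 : 0 < B by apply: lt_le_trans lB.
  apply/andP; split.
    by rewrite /rho subr_ge0 ler_pdivrMr // mul1r.
  by rewrite /rho ltrBlDr ltrDl divr_gt0.
have [T hT] := pow_small hrho.
apply: le_trans (TC_ge Rs Q v0' T (cA m)).
rewrite lee_fin.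
apply: le_trans (LB T (cA m) (or_introl erefl)).
rewrite invrK -/rho.
have : 1 - 2^-1 <= 1 - rho ^+ T by lra.
move=> h; rewrite ler_pM2l //; apply: le_trans h; lra.
Qed.


Theorem proposition7p3 :
  exists (S : finType) (Rs : seq (reaction S)) (I : interface S),
    [/\ is_crn Rs, stably_correct Rs I &
      forall phi : nat -> Rdefinitions.R, volume_theta phi ->
        (exists (K : Rdefinitions.R) (N : nat), 0 < K /\
           forall n : nat, (N <= n)%N -> (RT_stab phi Rs I n <= (K * ln n%:R)%:E)%E) /\
        (exists (k : Rdefinitions.R) (N : nat), 0 < k /\
           forall n : nat, (N <= n)%N -> ((k * n%:R)%:E <= RT_stab_esc phi Rs I n)%E)].
Proof.
exists Sp, Rs, II; split; [exact: is_crn_Rs|exact: stably_correct_Rs|].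
move=> phi [a [b [a0 b0 Hphi]]].
have phipos : forall n, (1 <= n)%N -> 0 < phi n.
  move=> n hn; have /andP[h _] := Hphi n hn.
  by apply: lt_le_trans h; rewrite mulr_gt0 // ltr0n.
split.
- have l4 : 0 < ln 4%:R :> Rdefinitions.R by apply: ln_gt0; rewrite ltr1n.
  exists (ln 4%:R)^-1, 4%N; split; first by rewrite invr_gt0.
  move=> n hn.
  apply: (@le_trans _ _ 1%:E).
    rewrite /RT_stab; apply: ge_ereal_inf; exists (RT_max (phi n) Rs II rhoS n).
      by exists rhoS; split => //; exact: rhoS_policy.
    apply: ge_ereal_sup => x [cs [al [sig [[ex wf val nn sk] ->]]]].
    apply: RT_exec_le => //; first by apply: phipos; lia.
    by case: val => c [_ [g _]].
  rewrite lee_fin mulrC ler_pdivlMr // mul1r.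
  by rewrite ler_ln ?posrE ?ltr0n ?ler_nat //; lia.
- exists (a / 2), 4%N; split; first by rewrite divr_gt0.
  move=> n hn.
  set m := (n - 4)%N.
  have en : n = (m + 4)%N by rewrite /m subnK.
  have v0 : 0 < phi n by apply: phipos; lia.
  have v0' := ltW v0.
  apply: le_ereal_inf_tmp => y [rho [pol esc ->]].
  have Hesc : forall a0, a0 \in Rs -> rho (cA m) a0 -> a0 = re.
    move=> a1 ha h; apply: (escA (m:=m) (pol _ _ h)).
    by apply: esc => //; rewrite /cA norm1_mk.
  have ub : forall M, (RT_exec (phi n) Rs II (cs_ex m M) (al_ex M) id rho <=
                       RT_max (phi n) Rs II rho n)%E.
    move=> M; apply: ereal_sup_ubound.
    exists (cs_ex m M), (al_ex M), id; split => //.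
    split; [exact: exec_ex|exact: wf_ex|exact: valid_ex| |by []].
    by rewrite cs_le // /cA norm1_mk en; lia.
  case: (boolP (rho (cA m) re)) => hre.
    apply: le_trans (ub 0%N); rewrite RT_case2.
    apply: le_trans (TC_re_lb m v0 _); last first.
      move=> a1 ha; case: (boolP (rho (cA m) a1)) => h.
        by rewrite (Hesc a1 ha h) eqxx.
      by apply/esym/negbTE; apply: contraNneq h => ->.
    rewrite lee_fin.
    have hn1 : (0 < n)%N by lia.
    have /andP[h _] := Hphi n hn1.
    lra.
  have H0 : forall a1, a1 \in Rs -> ~~ rho (cA m) a1.
    move=> a1 ha; apply/negP => h; move: hre; by rewrite -(Hesc a1 ha h) h.
  set Pi := prop_total (phi n) Rs (cA m).
  have Pi0 : 0 < Pi.
    apply: lt_le_trans (prop_total_ge _ v0' vD_in).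
    by rewrite prop_vD /cA mkC ltr0n.
  set M := Num.truncn (a / 2 * n%:R * Pi).
  apply: le_trans (ub M).
  apply: le_trans _ (@RT_case1 m M (phi n) rho v0' H0).
  rewrite lee_fin ler_pdivlMr //.
  apply: ltW; exact: truncnS_gt.
Qed.
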